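(* Let $u$ be a coherent utility on $L^0$ with determining set $\mathcal{D}$, let $Y$ be a random variable or random vector, and let $X,W\in L^1_s(\mathcal{D})\cap L^1_s(\mathsf{E}(\mathcal{D}\mid Y))\cap L^1$. Then $$u^{fc}(X;Y;W)=u^c\big(\mathsf{E}(X\mid Y);\mathsf{E}(W\mid Y)\big).$$
   Context: Let $(\Omega,\mathcal{F},\mathsf{P})$ be a probability space, $L^0$ the space of all real random variables, $L^1=L^1(\mathsf{P})$, and $\mathcal{P}$ the set of probability measures on $\mathcal{F}$ absolutely continuous with respect to $\mathsf{P}$; measures are identified with their densities. For $\mathsf{Q}\in\mathcal{P}$, $\mathsf{E}_\mathsf{Q}X:=\mathsf{E}_\mathsf{Q}X^+-\mathsf{E}_\mathsf{Q}X^-$ with the convention $\infty-\infty=-\infty$. A coherent utility on $L^0$ is a map $u:L^0\to[-\infty,\infty]$ of the form $u(X)=\inf_{\mathsf{Q}\in\mathcal{D}}\mathsf{E}_\mathsf{Q}X$ for a nonempty $\mathcal{D}\subseteq\mathcal{P}$; its determining set is the largest such set, $\{\mathsf{Q}\in\mathcal{P}:\mathsf{E}_\mathsf{Q}X\ge u(X)\ \forall X\in L^0\}$. For $\mathcal{C}\subseteq\mathcal{P}$, $L^1_s(\mathcal{C})=\{X\in L^0:\lim_{n\to\infty}\sup_{\mathsf{Q}\in\mathcal{C}}\mathsf{E}_\mathsf{Q}|X|I(|X|>n)=0\}$. For a random vector $Y$, $\mathsf{E}(\mathcal{D}\mid Y):=\{\mathsf{E}(Z\mid Y):Z\in\mathcal{D}\}$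 and $u^f(X;Y):=\inf_{\mathsf{Q}\in\mathsf{E}(\mathcal{D}\mid Y)}\mathsf{E}_\mathsf{Q}X$. Extreme measures: $\mathcal{X}_\mathcal{D}(W)=\{\mathsf{Q}\in\mathcal{D}:\mathsf{E}_\mathsf{Q}W=u(W)\in(-\infty,\infty)\}$ and $\mathcal{X}_{\mathsf{E}(\mathcal{D}\mid Y)}(W)=\{\mathsf{Q}\in\mathsf{E}(\mathcal{D}\mid Y):\mathsf{E}_\mathsf{Q}W=u^f(W;Y)\in(-\infty,\infty)\}$. Utility contribution: $u^c(X;W)=\inf_{\mathsf{Q}\in\mathcal{X}_\mathcal{D}(W)}\mathsf{E}_\mathsf{Q}X$; factor utility contribution: $u^{fc}(X;Y;W)=\inf_{\mathsf{Q}\in\mathcal{X}_{\mathsf{E}(\mathcal{D}\mid Y)}(W)}\mathsf{E}_\mathsf{Q}X$. *)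

(* Defs.v *)
From HB Require Import structures.
From mathcomp Require Import all_boot all_order all_algebra.
From mathcomp Require Import all_classical all_reals all_analysis.
Set Implicit Arguments. Unset Strict Implicit. Unset Printing Implicit Defensive.
Import Order.TTheory GRing.Theory Num.Theory.
Local Open Scope classical_set_scope.
Local Open Scope ring_scope.

Section Defs.
Context {d : measure_display} {T : measurableType d} {R : realType}
  (P : probability T R).

Definition L0 : set (T -> R) := [set X | measurable_fun setT X].

(* The set \mathcal{P}: probability measures absolutely continuous w.r.t. P,
   identified with their densities dQ/dP. *)
Definition density (Z : T -> R) : Prop :=
  measurable_fun setT Z /\ (forall x, 0 <= Z x) /\
  (\int[P]_x (Z x)%:E = 1)%E.

(* E_Q X := E_Q X^+ - E_Q X^- ; ereal addition makes -oo absorbing, so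
   +oo - +oo = -oo as required. *)
Definition EQ (Q : T -> R) (X : T -> R) : \bar R :=
  ((\int[P]_x (Q x * Num.max (X x) 0)%:E)
   - (\int[P]_x (Q x * Num.max (- X x) 0)%:E))%E.

Definition inf_EQ (C : set (T -> R)) (X : T -> R) : \bar R :=
  ereal_inf [set EQ Q X | Q in C].

Definition coherent_utility (u : (T -> R) -> \bar R) : Prop :=
  exists D : set (T -> R), D !=set0 /\ D `<=` density /\
    forall X, L0 X -> u X = inf_EQ D X.

Definition determining_set (u : (T -> R) -> \bar R) : set (T -> R) :=
  [set Q | density Q /\ forall X, L0 X -> (u X <= EQ Q X)%E].

Definition L1s (C : set (T -> R)) : set (T -> R) :=
  [set X | L0 X /\
    (fun n : nat => ereal_sup
       [set EQ Q (fun w => if (n%:R < `|X w|) then `|X w| else 0) | Q in C])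
      @ \oo --> (0 : \bar R)].

Definition sigmaY n (Y : 'I_n -> T -> R) : set (set T) :=
  <<s [set Y i @^-1` B | i in [set: 'I_n] & B in [set B : set R | measurable B]] >>.

Definition is_cond_exp n (Y : 'I_n -> T -> R) (Z Zc : T -> R) : Prop :=
  (forall B : set R, measurable B -> sigmaY Y (Zc @^-1` B)) /\
  P.-integrable setT (fun x => (Zc x)%:E) /\
  forall A, sigmaY Y A ->
    (\int[P]_(x in A) (Zc x)%:E = \int[P]_(x in A) (Z x)%:E)%E.

Definition condE_set n (C : set (T -> R)) (Y : 'I_n -> T -> R) : set (T -> R) :=
  [set Q | density Q /\ exists2 Z, C Z & is_cond_exp Y Z Q].

Definition extreme (C : set (T -> R)) (v : \bar R) (W : T -> R) : set (T -> R) :=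
  [set Q | C Q /\ EQ Q W = v /\ v \is a fin_num].

Definition uf n (u : (T -> R) -> \bar R) (Y : 'I_n -> T -> R) (X : T -> R) :=
  inf_EQ (condE_set (determining_set u) Y) X.

Definition uc (u : (T -> R) -> \bar R) (X W : T -> R) : \bar R :=
  inf_EQ (extreme (determining_set u) (u W) W) X.

Definition ufc n (u : (T -> R) -> \bar R) (Y : 'I_n -> T -> R) (X W : T -> R) :=
  inf_EQ (extreme (condE_set (determining_set u) Y) (uf u Y W) W) X.

End Defs.

(* Main.v *)
Require Import Defs.
From HB Require Import structures.
From mathcomp Require Import all_boot all_order all_algebra.
From mathcomp Require Import all_classical all_reals all_analysis.
From mathcomp Require Import measurable_realfun.
From mathcomp Require Import lra.
Import Order.TTheory GRing.Theory Num.Theory.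
Local Open Scope classical_set_scope.
Local Open Scope ring_scope.

Section Cond.
Context d (T : measurableType d) (R : realType) (P : probability T R) (G : set (set T)).
Hypothesis GP : <<s G>> `<=` measurable.
Local Notation T' := (g_sigma_algebraType G).

Lemma idT_meas : measurable_fun [set: T] (id : T -> T').
Proof. move=> _ B mB; rewrite setTI; exact: GP. Qed.

Lemma measT' (f : T' -> R) : measurable_fun [set: T'] f -> measurable_fun [set: T] (f : T -> R).
Proof. move=> mf _ B mB; rewrite setTI; apply: GP; have := mf measurableT B mB; by rewrite setTI. Qed.

Import HBNNSimple.

Lemma Lsimple (f : T -> R) (s : {nnsfun T' >-> R}) :
  measurable_fun setT f -> (forall x, 0 <= f x) ->
  (\int[P]_x (f x * s x)%:E =
   \sum_(y \in range s) y%:E * \int[P]_(x in s @^-1` [set y]) (f x)%:E)%E.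
Proof.
move=> mf f0.
have ms : forall y, measurable (s @^-1` [set y] : set T).
  by move=> y; apply: GP; exact: (measurable_funPTI s (measurable_set1 y)).
transitivity (\int[P]_x (\sum_(y \in range s) (f x * (y * \1_(s @^-1` [set y]) x))%:E))%E.
  apply: eq_integral => x _; rewrite fsumEFin//; congr (_%:E).
  rewrite -fsbig_distrr /=; last by [].
  congr (_ * _); exact: (fimfunE s x).
rewrite ge0_integral_fsum//; last 2 first.
  - move=> y; apply/measurable_EFinP; apply: measurable_funM => //.
    apply: measurable_funM => //; exact: measurable_indic.
  - move=> y x _; rewrite lee_fin mulr_ge0//; exact: nnfun_muleindic_ge0.
apply: eq_fsbigr => y yr.
have y0 : 0 <= y by move: yr; rewrite inE => -[t _ <-].
transitivity (\int[P]_(x in s @^-1` [set y]) (y%:E * (f x)%:E))%E.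
  rewrite [RHS]integral_mkcond; apply: eq_integral => x _; rewrite /patch indicE; case: ifP => xA /=.
    by rewrite mulr1 mulrC EFinM.
  by rewrite mulr0 mulr0.
rewrite ge0_integralZl//.
- apply/measurable_EFinP; exact: measurable_funTS.
- by move=> x _; rewrite lee_fin.
Qed.

Lemma Llim (f h : T -> R) (mh : measurable_fun [set: T'] (EFin \o (h : T' -> R))) :
  measurable_fun setT f -> (forall x, 0 <= f x) -> (forall x, 0 <= h x) ->
  (\int[P]_x (f x * h x)%:E =
   limn (fun n => \int[P]_x (f x * nnsfun_approx (measurableT : measurable [set: T']) mh n x)%:E))%E.
Proof.
move=> mf f0 h0.
set hn := nnsfun_approx _ mh.
rewrite -monotone_convergence//.
- apply: eq_integral => x _; apply/esym/cvg_lim => //.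
  under eq_fun do rewrite EFinM.
  rewrite EFinM; apply: cvgeZl => //.
  have := @cvg_nnsfun_approx _ T' R setT measurableT (EFin \o h) mh.
  by move=> /(_ (fun x _ => h0 x) x I).
- move=> n; apply/measurable_EFinP; apply: measurable_funM => //.
  exact: measT' (@measurable_funPT _ _ _ _ (hn n)).
- by move=> n x _; rewrite lee_fin mulr_ge0.
- move=> x _ a b ab; rewrite lee_fin ler_wpM2l//.
  by have /lefP := @nd_nnsfun_approx _ T' R setT measurableT _ mh a b ab; apply.
Qed.

Lemma Lmain (f1 f2 h : T -> R) :
  measurable_fun setT f1 -> measurable_fun setT f2 ->
  (forall x, 0 <= f1 x) -> (forall x, 0 <= f2 x) ->
  (forall A, <<s G>> A ->
     \int[P]_(x in A) (f1 x)%:E = \int[P]_(x in A) (f2 x)%:E)%E ->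
  measurable_fun [set: T'] (h : T' -> R) -> (forall x, 0 <= h x) ->
  (\int[P]_x (f1 x * h x)%:E = \int[P]_x (f2 x * h x)%:E)%E.
Proof.
move=> mf1 mf2 f10 f20 e mh h0.
have mh' : measurable_fun [set: T'] (EFin \o (h : T' -> R)) by exact/measurable_EFinP.
rewrite (@Llim f1 h mh')// (@Llim f2 h mh')//; congr (limn _); apply/funext => n.
rewrite !Lsimple//; apply: eq_fsbigr => y _; congr (_ * _)%E.
apply: e; exact: (measurable_funPTI (nnsfun_approx (measurableT : measurable [set: T']) mh' n) (measurable_set1 y)).
Qed.

Lemma arith1 (a b c e : \bar R) : a \is a fin_num -> b \is a fin_num ->
  c \is a fin_num -> e \is a fin_num -> (a - b = c - e -> a + e = b + c)%E.
Proof.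
move: a b c e => [a| |] [b| |] [c| |] [e| |] //= _ _ _ _.
by move=> -[h]; congr (_%:E); lra.
Qed.

Lemma arith2 (a b c e : \bar R) : a \is a fin_num -> b \is a fin_num ->
  c \is a fin_num -> e \is a fin_num -> (a + e = b + c -> a - b = c - e)%E.
Proof.
move: a b c e => [a| |] [b| |] [c| |] [e| |] //= _ _ _ _.
by move=> -[h]; congr (_%:E); lra.
Qed.

Lemma split_eq (V Vc : T -> R) (A : set T) : measurable A ->
  P.-integrable setT (EFin \o V) -> P.-integrable setT (EFin \o Vc) ->
  (\int[P]_(x in A) (V x)%:E = \int[P]_(x in A) (Vc x)%:E ->
  \int[P]_(x in A) (V^\+ x + Vc^\- x)%:E = \int[P]_(x in A) (V^\- x + Vc^\+ x)%:E)%E.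
Proof.
move=> mA iV iVc.
have iVA := integrableS measurableT mA (subsetT A) iV.
have iVcA := integrableS measurableT mA (subsetT A) iVc.
have mV := measurable_int _ iV. have mVc := measurable_int _ iVc.
move/measurable_EFinP in mV; move/measurable_EFinP in mVc.
rewrite integralE [X in _ = X -> _]integralE (funerpos V) (funerneg V) (funerpos Vc) (funerneg Vc).
move=> h.
under eq_integral do rewrite EFinD.
under [RHS]eq_integral do rewrite EFinD.
rewrite ge0_integralD//; last 4 first.
- by move=> x _; rewrite lee_fin funrpos_ge0.
- by apply/measurable_EFinP; apply: measurable_funTS; exact: measurable_funrpos.
- by move=> x _; rewrite lee_fin funrneg_ge0.
- by apply/measurable_EFinP; apply: measurable_funTS; exact: measurable_funrneg.
rewrite ge0_integralD//; last 4 first.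
- by move=> x _; rewrite lee_fin funrneg_ge0.
- by apply/measurable_EFinP; apply: measurable_funTS; exact: measurable_funrneg.
- by move=> x _; rewrite lee_fin funrpos_ge0.
- by apply/measurable_EFinP; apply: measurable_funTS; exact: measurable_funrpos.
apply: (arith1 _ _ _ _ _ _ _ _ h); apply: integrable_fin_num => //.
- exact: integrable_funrpos.
- exact: integrable_funrneg.
- exact: integrable_funrpos.
- exact: integrable_funrneg.
Qed.

Lemma step2 (Z Q Vc : T -> R) :
  measurable_fun setT Z -> (forall x, 0 <= Z x) ->
  measurable_fun setT Q -> (forall x, 0 <= Q x) ->
  (forall A, <<s G>> A ->
     \int[P]_(x in A) (Q x)%:E = \int[P]_(x in A) (Z x)%:E)%E ->
  measurable_fun [set: T'] (Vc : T' -> R) ->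
  EQ P Z Vc = EQ P Q Vc.
Proof.
move=> mZ Z0 mQ Q0 e mVc; rewrite /EQ; congr (_ - _)%E.
- apply: Lmain => //; first by move=> A hA; rewrite e.
  + exact: measurable_funrpos.
  + by move=> x; exact: funrpos_ge0.
- apply: Lmain => //; first by move=> A hA; rewrite e.
  + exact: measurable_funrneg.
  + by move=> x; exact: funrneg_ge0.
Qed.

Lemma mulineq (q a b : R) : 0 <= q -> 0 <= a -> q * b <= (a + b) * q.
Proof. by move=> q0 a0; rewrite mulrDl [b * q]mulrC lerDr mulr_ge0. Qed.

Lemma step1 (Q V Vc : T -> R) :
  measurable_fun [set: T'] (Q : T' -> R) -> (forall x, 0 <= Q x) ->
  P.-integrable setT (EFin \o V) -> P.-integrable setT (EFin \o Vc) ->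
  measurable_fun [set: T'] (Vc : T' -> R) ->
  (forall A, <<s G>> A ->
     \int[P]_(x in A) (V x)%:E = \int[P]_(x in A) (Vc x)%:E)%E ->
  (\int[P]_x (Q x * V^\+ x)%:E < +oo)%E ->
  (\int[P]_x (Q x * V^\- x)%:E < +oo)%E ->
  EQ P Q V = EQ P Q Vc.
Proof.
move=> mQ' Q0 iV iVc mVc' eV fa fb.
have mQ := measT' _ mQ'. have mVc := measT' _ mVc'.
have mV := measurable_int _ iV; move/measurable_EFinP in mV.
set f1 := fun x => V^\+ x + Vc^\- x.
set f2 := fun x => V^\- x + Vc^\+ x.
have e : forall A, <<s G>> A ->
    (\int[P]_(x in A) (f1 x)%:E = \int[P]_(x in A) (f2 x)%:E)%E.
  by move=> A hA; apply: split_eq => //; [exact: GP|exact: eV].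
have mf1 : measurable_fun setT f1.
  by apply: measurable_funD; [exact: measurable_funrpos|exact: measurable_funrneg].
have mf2 : measurable_fun setT f2.
  by apply: measurable_funD; [exact: measurable_funrneg|exact: measurable_funrpos].
have f10 x : 0 <= f1 x by rewrite addr_ge0 ?funrpos_ge0 ?funrneg_ge0.
have f20 x : 0 <= f2 x by rewrite addr_ge0 ?funrpos_ge0 ?funrneg_ge0.
have L := fun h => Lmain f1 f2 h mf1 mf2 f10 f20 e.
set B : set T := [set x | 0 <= Vc x].
have mB : measurable (B : set T').
  have := mVc' measurableT _ (@measurable_itv R `[0%R, +oo[).
  rewrite setTI; congr measurable; apply/seteqP; split => x /=;
  by rewrite in_itv /= andbT.
have pm1 x : 0 <= Vc x -> Vc^\- x = 0.
  by move=> h; rewrite /funrneg max_r// oppr_le0.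
have pm2 x : ~ (0 <= Vc x) -> Vc^\+ x = 0.
  by move=> /negP h; rewrite /funrpos max_r//; move: h; rewrite -real_ltNge ?real0 ?num_real// => /ltW.
have mhB : measurable_fun [set: T'] (fun x : T' => Q x * \1_B x).
  by apply: measurable_funM => //; exact: measurable_indic.
have mhB' : measurable_fun [set: T'] (fun x : T' => Q x * \1_(~` B) x).
  by apply: measurable_funM => //; apply: measurable_indic; exact: measurableC.
have indic_ge0 (A : set T) x : 0 <= \1_A x :> R by rewrite indicE ler0n.
have LB := L _ mhB (fun x => mulr_ge0 (Q0 x) (indic_ge0 _ _)).
have LB' := L _ mhB' (fun x => mulr_ge0 (Q0 x) (indic_ge0 _ _)).
have LQ := L _ mQ' Q0.
have mEQ (g : T -> R) : measurable_fun setT g ->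
    measurable_fun setT (fun x => (Q x * g x)%:E).
  by move=> mg; apply/measurable_EFinP; exact: measurable_funM.
have mVp := measurable_funrpos mV. have mVn := measurable_funrneg mV.
have mVcp := measurable_funrpos mVc. have mVcn := measurable_funrneg mVc.
have posp := funrpos_ge0. have negp := funrneg_ge0.
have Hsum : (\int[P]_x (Q x * V^\+ x)%:E + \int[P]_x (Q x * Vc^\- x)%:E =
    \int[P]_x (Q x * V^\- x)%:E + \int[P]_x (Q x * Vc^\+ x)%:E)%E.
  rewrite -ge0_integralD//; last 4 first.
  - by move=> x _; rewrite lee_fin mulr_ge0.
  - exact: mEQ.
  - by move=> x _; rewrite lee_fin mulr_ge0.
  - exact: mEQ.
  rewrite -ge0_integralD//; last 4 first.
  - by move=> x _; rewrite lee_fin mulr_ge0.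
  - exact: mEQ.
  - by move=> x _; rewrite lee_fin mulr_ge0.
  - exact: mEQ.
  transitivity (\int[P]_x (f1 x * Q x)%:E)%E.
    by apply: eq_integral => x _; rewrite -EFinD /f1; congr (_%:E); lra.
  rewrite LQ; apply: eq_integral => x _; rewrite -EFinD /f2; congr (_%:E); lra.
have mf1h (A : set T) : measurable (A : set T') ->
    measurable_fun setT (fun x => (f1 x * (Q x * \1_A x))%:E).
  move=> mA; apply/measurable_EFinP; apply: measurable_funM => //.
  apply: measurable_funM => //; apply: measurable_indic; exact: GP.
have mf2h (A : set T) : measurable (A : set T') ->
    measurable_fun setT (fun x => (f2 x * (Q x * \1_A x))%:E).
  move=> mA; apply/measurable_EFinP; apply: measurable_funM => //.
  apply: measurable_funM => //; apply: measurable_indic; exact: GP.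
have mBc : measurable (~` B : set T') by exact: measurableC.
have Hc : (\int[P]_x (Q x * Vc^\+ x)%:E <= \int[P]_x (Q x * V^\+ x)%:E)%E.
  apply: (@le_trans _ _ (\int[P]_x (f2 x * (Q x * \1_B x))%:E)%E).
    apply: ge0_le_integral => //; first by move=> x _; rewrite lee_fin mulr_ge0.
      exact: mEQ.
    by apply: mf2h.
    move=> x _; rewrite lee_fin /f2 indicE.
    have [h|h] := boolP (0 <= Vc x).
      rewrite (mem_set (h : B x)) mulr1. exact: mulineq.
    rewrite memNset ?mulr0 ?mulr0; last by move/negP: h.
    by rewrite pm2 ?mulr0//; move/negP: h.
  rewrite -LB; apply: ge0_le_integral => //.
  - by move=> x _; rewrite lee_fin !mulr_ge0.
  - exact: mf1h.
  - exact: mEQ.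
  move=> x _; rewrite lee_fin /f1 indicE.
  have [h|h] := boolP (0 <= Vc x).
    rewrite (mem_set (h : B x)) mulr1 pm1// addr0 mulrC//.
  rewrite memNset ?mulr0; last by move/negP: h.
  by rewrite mulr_ge0.
have He : (\int[P]_x (Q x * Vc^\- x)%:E <= \int[P]_x (Q x * V^\- x)%:E)%E.
  apply: (@le_trans _ _ (\int[P]_x (f1 x * (Q x * \1_(~` B) x))%:E)%E).
    apply: ge0_le_integral => //; first by move=> x _; rewrite lee_fin mulr_ge0.
      exact: mEQ.
    by apply: mf1h.
    move=> x _; rewrite lee_fin /f1 indicE.
    have [h|h] := boolP (0 <= Vc x).
      by rewrite memNset ?mulr0 ?pm1 ?mulr0//; move=> /= /(_ h).
    rewrite mem_set ?mulr1; last by move/negP: h.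
    exact: mulineq.
  rewrite LB'; apply: ge0_le_integral => //.
  - by move=> x _; rewrite lee_fin !mulr_ge0.
  - exact: mf2h.
  - exact: mEQ.
  move=> x _; rewrite lee_fin /f2 indicE.
  have [h|h] := boolP (0 <= Vc x).
    by rewrite memNset ?mulr0 ?mulr_ge0//; move=> /= /(_ h).
  rewrite mem_set ?mulr1; last by move/negP: h.
  rewrite pm2; last by move/negP: h.
  by rewrite addr0 mulrC.
have fin0 (g : T -> R) : (forall x, 0 <= g x) ->
    (\int[P]_x (Q x * g x)%:E < +oo)%E ->
    (\int[P]_x (Q x * g x)%:E)%E \is a fin_num.
  move=> g0 hg; rewrite ge0_fin_numE// integral_ge0// => x _.
  by rewrite lee_fin mulr_ge0.
rewrite /EQ; apply: arith2.
- exact: (fin0 _ (funrpos_ge0 V) fa).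
- exact: (fin0 _ (funrneg_ge0 V) fb).
- exact: (fin0 _ (funrpos_ge0 Vc) (le_lt_trans Hc fa)).
- exact: (fin0 _ (funrneg_ge0 Vc) (le_lt_trans He fb)).
- exact: Hsum.
Qed.
End Cond.

Section Cond2.
Context d (T : measurableType d) (R : realType) (P : probability T R) (G : set (set T)).
Hypothesis GP : <<s G>> `<=` measurable.
Local Notation T' := (g_sigma_algebraType G).

Definition muS : set T' -> \bar R := fun A => P (A : set T).

Let muS0 : muS set0 = 0%E. Proof. exact: measure0. Qed.
Let muS_ge0 A : (0 <= muS A)%E. Proof. exact: measure_ge0. Qed.
Let muS_ssa : semi_sigma_additive muS.
Proof.
move=> F mF tF mUF; apply: (measure_semi_sigma_additive (s:=P)) => //.
- by move=> n; apply: GP; exact: mF.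
- exact: GP.
Qed.
HB.instance Definition _ := isMeasure.Build _ T' R muS muS0 muS_ge0 muS_ssa.
HB.instance Definition _ := Measure_isProbability.Build _ T' R muS (probability_setT P).

Lemma idT_meas2 : measurable_fun [set: T] (id : T -> T').
Proof. move=> _ B mB; rewrite setTI; exact: GP. Qed.

Lemma muS_integral (g : T' -> R) (A : set T') : measurable A ->
  measurable_fun [set: T'] g -> (forall x, 0 <= g x) ->
  (\int[muS]_(x in A) (g x)%:E = \int[P]_(x in A) (g x)%:E)%E.
Proof.
move=> mA mg g0.
have -> : muS = pushforward P (id : T -> T') by [].
rewrite ge0_integral_pushforward//.
- exact: idT_meas2.
- by apply/measurable_EFinP; exact: measurable_funTS.
- by move=> x _; rewrite lee_fin.
Qed.

Variables (Z : T -> R) (mZ : measurable_fun setT Z) (Z0 : forall x, 0 <= Z x)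
  (iZ : P.-integrable setT (EFin \o Z)).

Definition nuZ : set T' -> \bar R := fun A => (\int[P]_(x in A) (Z x)%:E)%E.

Let nuZ0 : nuZ set0 = 0%E. Proof. exact: integral_set0. Qed.
Let nuZ_ge0 A : (0 <= nuZ A)%E.
Proof. by apply: integral_ge0 => x _; rewrite lee_fin. Qed.
Let nuZ_ssa : semi_sigma_additive nuZ.
Proof.
move=> F mF tF mUF.
have := @semi_sigma_additive_nng_induced _ T R P (EFin \o Z).
move=> /(_ _ _ F); apply => //.
- exact/measurable_EFinP.
- by move=> n; apply: GP; exact: mF.
- exact: GP.
Qed.
HB.instance Definition _ := isMeasure.Build _ T' R nuZ nuZ0 nuZ_ge0 nuZ_ssa.
Let nuZ_fin : fin_num_fun nuZ.
Proof.
move=> A mA; apply: integrable_fin_num; first exact: GP.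
exact: (integrableS (@measurableT _ T) (GP _ mA) (@subsetT T A) iZ).
Qed.
HB.instance Definition _ := Measure_isFinite.Build _ T' R nuZ nuZ_fin.

Lemma nuZ_dom : nuZ `<< muS.
Proof.
apply/null_content_dominatesP => A mA PA.
apply: null_set_integral => //; first exact: GP.
apply/measurable_EFinP; exact: measurable_funTS.
Qed.

Definition RNZ := Radon_Nikodym_SigmaFinite.f nuZ muS.
Definition QZ : T -> R := fun x => fine (RNZ x).

Lemma QZ_ge0 x : 0 <= QZ x.
Proof. by rewrite /QZ fine_ge0// Radon_Nikodym_SigmaFinite.f_ge0//; exact: nuZ_dom. Qed.

Lemma QZE x : (QZ x)%:E = RNZ x.
Proof. by rewrite /QZ fineK// Radon_Nikodym_SigmaFinite.f_fin_num//; exact: nuZ_dom. Qed.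

Lemma QZ_meas : measurable_fun [set: T'] (QZ : T' -> R).
Proof.
apply/measurable_EFinP.
have -> : EFin \o (QZ : T' -> R) = RNZ by apply/funext => x /=; rewrite QZE.
apply: measurable_int.
exact: (Radon_Nikodym_SigmaFinite.f_integrable nuZ_dom).
Qed.

Lemma QZ_int (A : set T) : <<s G>> A ->
  (\int[P]_(x in A) (QZ x)%:E = \int[P]_(x in A) (Z x)%:E)%E.
Proof.
move=> hA.
rewrite -(@muS_integral QZ A hA QZ_meas QZ_ge0).
under eq_integral do rewrite QZE.
by rewrite -Radon_Nikodym_SigmaFinite.f_integral//; exact: nuZ_dom.
Qed.
End Cond2.

Lemma pos_le_norm {R : realType} (r : R) : Num.max r 0 <= `|r| /\ Num.max (- r) 0 <= `|r|.
Proof.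
rewrite !ge_max normr_ge0 !andbT; split; first exact: ler_norm.
by rewrite -normrN; exact: ler_norm.
Qed.

Section Fin.
Context d (T : measurableType d) (R : realType) (P : probability T R).



Lemma L1s_fin (C : set (T -> R)) (V Q : T -> R) (g : T -> R) :
  C `<=` density P -> L1s P C V -> C Q ->
  measurable_fun setT g -> (forall x, 0 <= g x <= `|V x|) ->
  (\int[P]_x (Q x * g x)%:E < +oo)%E.
Proof.
move=> CD [mV hcv] CQ mg g0.
have [mQ [Q0 Q1]] := CD Q CQ.
move/fine_cvgP: hcv => [hfin hcv'].
have hlt := cvgr_lt _ hcv' _ (@ltr01 R) (FF := eventually_filter).
have [N _ HN] := filterI hfin hlt.
have [fN ltN] := HN N (leqnn N).
set t := fun w => if (N%:R < `|V w|) then `|V w| else 0.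
have t0 w : 0 <= t w by rewrite /t; case: ifP.
have mt : measurable_fun setT t.
  apply: measurable_fun_ifT => //.
  - apply: measurable_fun_ltr => //; exact: measurableT_comp.
  - exact: measurableT_comp.
have Et : EQ P Q t = (\int[P]_x (Q x * t x)%:E)%E.
  rewrite /EQ; under [X in (_ - X)%E]eq_integral do rewrite max_r ?oppr_le0// mulr0.
  rewrite integral0 sube0; apply: eq_integral => x _; rewrite max_l//.
have tle : (\int[P]_x (Q x * t x)%:E < +oo)%E.
  rewrite -Et; apply: (@le_lt_trans _ _ (ereal_sup [set EQ P Q0 t | Q0 in C])).
    by apply: ereal_sup_ubound; exists Q.
  by rewrite -(fineK fN) ltry.
have mQt : measurable_fun setT (fun x => (Q x * t x)%:E).
  by apply/measurable_EFinP; exact: measurable_funM.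
apply: (@le_lt_trans _ _ (\int[P]_x ((N%:R * Q x)%:E + (Q x * t x)%:E))%E).
  apply: ge0_le_integral => //.
  - by move=> x _; rewrite lee_fin mulr_ge0//; case/andP: (g0 x).
  - by apply/measurable_EFinP; exact: measurable_funM.
  - apply: emeasurable_funD => //; apply/measurable_EFinP; exact: measurable_funM.
  move=> x _; rewrite -EFinD lee_fin [_ * Q x]mulrC -mulrDr ler_wpM2l//.
  have /andP[_ gV] := g0 x.
  rewrite /t; case: ifP => h; first by rewrite (le_trans gV)// lerDr.
  by rewrite addr0 (le_trans gV)//; rewrite real_leNgt ?h// num_real.
rewrite ge0_integralD//.
- under eq_integral do rewrite EFinM.
  rewrite ge0_integralZl//; last 2 first.
  + exact/measurable_EFinP.
  + by move=> x _; rewrite lee_fin.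
  by rewrite Q1 mule1 lte_add_pinfty// ltry.
- by move=> x _; rewrite lee_fin mulr_ge0.
- by apply/measurable_EFinP; exact: measurable_funM.
- by move=> x _; rewrite lee_fin mulr_ge0.
Qed.
End Fin.


Theorem theorem6p3 (d : measure_display) (T : measurableType d) (R : realType)
  (P : probability T R) (u : (T -> R) -> \bar R) (n : nat)
  (Y : 'I_n.+1 -> T -> R) (X W Xc Wc : T -> R) :
  coherent_utility P u ->
  (forall i, measurable_fun setT (Y i)) ->
  L1s P (determining_set P u) X ->
  L1s P (condE_set P (determining_set P u) Y) X ->
  P.-integrable setT (fun x => (X x)%:E) ->
  L1s P (determining_set P u) W ->
  L1s P (condE_set P (determining_set P u) Y) W ->
  P.-integrable setT (fun x => (W x)%:E) ->
  is_cond_exp P Y X Xc -> is_cond_exp P Y W Wc ->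
  ufc P u Y X W = uc P u Xc Wc.
Proof.
move=> [D' [D'0 [D'dens uE]]] mY hXD hXC iX hWD hWC iW cX cW.
set D := determining_set P u.
set C := condE_set P D Y.
set G0 := [set Y i @^-1` B | i in [set: 'I_n.+1] & B in [set B : set R | measurable B]].
have GP : <<s G0>> `<=` measurable.
  apply: smallest_sub; first exact: sigma_algebra_measurable.
  move=> _ [i _ [B mB <-]]; have := mY i measurableT B mB; by rewrite setTI.
have SE : sigmaY Y = <<s G0>> by [].
have Smeas (f : T -> R) : (forall B : set R, measurable B -> sigmaY Y (f @^-1` B)) ->
    measurable_fun [set: g_sigma_algebraType G0] (f : g_sigma_algebraType G0 -> R).
  by move=> h _ B mB; rewrite setTI; exact: h.
have CD : C `<=` density P by move=> Q [].
have DD : D `<=` density P by move=> Q [].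
have keyV (V Vc Q Z : T -> R) : L1s P C V -> P.-integrable setT (EFin \o V) ->
    is_cond_exp P Y V Vc -> C Q -> D Z -> is_cond_exp P Y Z Q ->
    EQ P Q V = EQ P Z Vc.
  move=> hV iV [mVc [iVc eVc]] CQ DZ [mQ [iQ eQ]].
  have [mZ [Z0 _]] := DD Z DZ.
  have [mQT [Q0 _]] := CD Q CQ.
  have mV := hV.1.
  have mVc' := Smeas _ mVc. have mQ' := Smeas _ mQ.
  rewrite (@step1 _ _ _ P _ GP _ _ _ mQ' Q0 iV iVc mVc').
  - rewrite (@step2 _ _ _ P _ GP _ _ _ mZ Z0 mQT Q0 _ mVc') //.
  - by move=> A hA; rewrite eVc.
  - apply: (@L1s_fin _ _ _ P C V Q _ CD hV CQ); first exact: measurable_funrpos.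
    by move=> x; rewrite funrpos_ge0 /=; have [] := pos_le_norm (V x).
  - apply: (@L1s_fin _ _ _ P C V Q _ CD hV CQ); first exact: measurable_funrneg.
    by move=> x; rewrite funrneg_ge0 /=; have [] := pos_le_norm (V x).
have DZfacts Z : D Z -> exists Q, C Q /\ is_cond_exp P Y Z Q.
  move=> DZ; have [mZ [Z0 Z1]] := DD Z DZ.
  have iZ : P.-integrable setT (EFin \o Z).
    apply/integrableP; split; first exact/measurable_EFinP.
    rewrite (eq_integral (fun x => (Z x)%:E)) ?Z1 ?ltry// => x _.
    by rewrite gee0_abs //= lee_fin.
  set Q := @QZ d T R P G0 GP Z mZ Z0 iZ.
  have mQ' := @QZ_meas d T R P G0 GP Z mZ Z0 iZ.
  have mQ := @measT' _ _ _ _ GP _ mQ'.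
  have Q0 := @QZ_ge0 d T R P G0 GP Z mZ Z0 iZ.
  have QI := @QZ_int d T R P G0 GP Z mZ Z0 iZ.
  have Q1 : (\int[P]_x (Q x)%:E = 1)%E.
    by rewrite QI ?Z1//; exact: (@measurableT _ (g_sigma_algebraType G0)).
  have cQ : is_cond_exp P Y Z Q.
    split; [|split].
    - by move=> B mB; have := mQ' measurableT B mB; rewrite setTI.
    - apply/integrableP; split; first exact/measurable_EFinP.
      rewrite (eq_integral (fun x => (Q x)%:E)) ?Q1 ?ltry// => x _.
      by rewrite gee0_abs //= lee_fin.
    - by move=> A hA; exact: QI.
  exists Q; split => //; split; first by split.
  by exists Z.
have L0Wc : L0 Wc := @measT' _ _ _ _ GP _ (Smeas _ cW.1).
have D'D : D' `<=` D.
  move=> Q D'Q; split; first exact: D'dens.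
  by move=> V hV; rewrite uE//; apply: ereal_inf_lbound; exists Q.
have uWcE : u Wc = inf_EQ P D' Wc := uE _ L0Wc.
have ufE : uf P u Y W = u Wc.
  apply/eqP; rewrite eq_le; apply/andP; split.
  - rewrite uWcE; apply/ereal_infP => _ [Z D'Z <-].
    have [Q [CQ cQ]] := DZfacts Z (D'D _ D'Z).
    rewrite -(keyV W Wc Q Z hWC iW cW CQ (D'D _ D'Z) cQ).
    by apply: ereal_inf_lbound; exists Q.
  - apply/ereal_infP => _ [Q CQ <-].
    have [_ [Z DZ cQ]] := CQ.
    rewrite (keyV W Wc Q Z hWC iW cW CQ DZ cQ).
    by have [_ hZ] := DZ; exact: hZ _ L0Wc.
rewrite /ufc /uc /inf_EQ; congr ereal_inf; apply/seteqP; split.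
- move=> _ [Q [CQ [EW fin]] <-]; have [_ [Z DZ cQ]] := CQ.
  exists Z; last by rewrite (keyV X Xc Q Z hXC iX cX CQ DZ cQ).
  split=> //; split; last by rewrite -ufE.
  by rewrite -(keyV W Wc Q Z hWC iW cW CQ DZ cQ) EW ufE.
- move=> _ [Z [DZ [EW fin]] <-]; have [Q [CQ cQ]] := DZfacts Z DZ.
  exists Q; last by rewrite (keyV X Xc Q Z hXC iX cX CQ DZ cQ).
  split=> //; split; last by rewrite ufE.
  by rewrite (keyV W Wc Q Z hWC iW cW CQ DZ cQ) EW ufE.
Qed.
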